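(* Let $q>0$, $q\neq1$. For every integer $N\ge0$, $$H_N(x;q)=[2]_q^N\,e^{-\frac{1}{[2]_q^2}D_x^2}\,x^N,$$ where $e^{aD_x^2}:=\sum_{n\ge0}\frac{a^n}{n!}D_x^{2n}$ (a finite sum on polynomials).
   Context: For $n\ge 0$ let $[n]_q=\frac{q^n-1}{q-1}$, $[0]_q!=1$, $[n]_q!=[1]_q\cdots[n]_q$, and $e_q(z)=\sum_{n\ge0}z^n/[n]_q!$. The $q$-derivative acts on polynomials by $D_x x^n=[n]_qx^{n-1}$ (equivalently $D_xf(x)=\frac{f(qx)-f(x)}{(q-1)x}$). The $q$-Hermite polynomials $H_N(x;q)$ are defined by the identity of formal power series in $t$: $e^{-t^2}e_q([2]_q t x)=\sum_{N\ge0}H_N(x;q)\,t^N/[N]_q!$. *)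

(* Defs.v *)
From HB Require Import structures.
From mathcomp Require Import all_boot all_order all_algebra.
From mathcomp Require Import reals.
Set Implicit Arguments. Unset Strict Implicit. Unset Printing Implicit Defensive.
Import Order.TTheory GRing.Theory Num.Theory.
Local Open Scope ring_scope.

Section QHermite.
Variable R : realType.

Definition qint (q : R) (n : nat) : R := (q ^+ n - 1) / (q - 1).

Definition qfact (q : R) (n : nat) : R := \prod_(1 <= i < n.+1) qint q i.

(* q-derivative on polynomials: D_x x^n = [n]_q x^(n-1), extended linearly *)
Definition qderiv (q : R) (p : {poly R}) : {poly R} :=
  \poly_(i < (size p).-1) (qint q i.+1 * p`_i.+1).

(* coefficient of t^n in e^{-t^2} *)
Definition expmsq_coef (n : nat) : R :=
  if ~~ odd n then (-1) ^+ n./2 / (n./2)`!%:R else 0.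

(* coefficient of t^n in e_q([2]_q t x) (a polynomial in x) *)
Definition eq_coef (q : R) (n : nat) : {poly R} :=
  ((qint q 2) ^+ n / qfact q n) *: 'X^n.

(* coefficient of t^N in the product e^{-t^2} e_q([2]_q t x) *)
Definition gen_coef (q : R) (N : nat) : {poly R} :=
  \sum_(i < N.+1) expmsq_coef i *: eq_coef q (N - i).

(* H_N(x;q) : defined by  gen_coef q N = H_N / [N]_q!  *)
Definition qHermite (q : R) (N : nat) : {poly R} := qfact q N *: gen_coef q N.

(* e^{a D_x^2} p = sum_{n>=0} a^n/n! D_x^{2n} p ; on x^N terms with 2n > N
   vanish, so summing n <= N is exact for deg p <= N *)
Definition expqD2 (q a : R) (N : nat) (p : {poly R}) : {poly R} :=
  \sum_(n < N.+1) (a ^+ n / n`!%:R) *: iter (2 * n) (qderiv q) p.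

End QHermite.

(* Main.v *)
Require Import Defs.
From HB Require Import structures.
From mathcomp Require Import all_boot all_order all_algebra.
From mathcomp Require Import reals.
From mathcomp Require Import ring lra.
Import Order.TTheory GRing.Theory Num.Theory.
Local Open Scope ring_scope.

Section H.
Variable R : realType.
Implicit Types (q : R).

Lemma qderivE q p i : (qderiv q p)`_i = qint q i.+1 * p`_i.+1.
Proof.
rewrite /qderiv coef_poly; case: ltnP => // hi.
rewrite nth_default ?mulr0 //; rewrite -ltnS in hi.
by apply: leq_trans hi; case: (size p).
Qed.

Lemma qderivZ q c p : qderiv q (c *: p) = c *: qderiv q p.
Proof. by apply/polyP => i; rewrite coefZ !qderivE coefZ mulrCA. Qed.

Lemma qint0 q : qint q 0 = 0.
Proof. by rewrite /qint expr0 subrr mul0r. Qed.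

Lemma qderivX q n : qderiv q 'X^n = qint q n *: 'X^(n.-1).
Proof.
apply/polyP => i; rewrite qderivE coefZ !coefXn.
case: n => [|n] /=; first by rewrite qint0 mul0r mulr0.
by rewrite eqSS; case: eqP => [->|]; rewrite ?mulr1 ?mulr0.
Qed.

Lemma iterX q N k : iter k (qderiv q) 'X^N =
  (\prod_(j < k) qint q (N - j)) *: 'X^(N - k).
Proof.
elim: k => [|k IH]; first by rewrite big_ord0 scale1r subn0.
rewrite iterS IH qderivZ qderivX big_ord_recr /= scalerA.
by rewrite subnS.
Qed.

Lemma qint_neq0 q i : 0 < q -> q != 1 -> qint q i.+1 != 0.
Proof.
move=> h0 h1; rewrite /qint mulf_neq0 ?invr_eq0 ?subr_eq0 //.
by rewrite pexpr_eq1 // ltW.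
Qed.

Lemma qfact_neq0 q n : 0 < q -> q != 1 -> qfact q n != 0.
Proof.
move=> h0 h1; rewrite /qfact big_nat prodf_seq_neq0.
apply/allP => i _; apply/implyP => /andP [hi _].
by case: i hi => // i _; apply: qint_neq0.
Qed.

Lemma qfact_split q N k : (k <= N)%N ->
  qfact q N = qfact q (N - k) * \prod_(j < k) qint q (N - j).
Proof.
elim: k => [|k IH] hk; first by rewrite big_ord0 mulr1 subn0.
rewrite IH ?(ltnW hk) // big_ord_recr /= mulrA [_ * qint _ _]mulrC mulrA.
congr (_ * _).
have -> : (N - k = (N - k.+1).+1)%N by rewrite subnS prednK // subn_gt0.
set m := (N - k.+1)%N.
by rewrite /qfact (big_nat_recr m.+1) //= mulrC.
Qed.

Lemma sum_double (V : nmodType) (F : nat -> V) j :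
  \sum_(i < j.*2) F i = \sum_(k < j) (F k.*2 + F k.*2.+1).
Proof.
elim: j => [|j IH]; first by rewrite !big_ord0.
by rewrite doubleS !big_ord_recr /= IH addrA.
Qed.

End H.

Theorem proposition2 (R : realType) (q : R) (hq0 : 0 < q) (hq1 : q != 1)
  (N : nat) :
  qHermite q N =
  (qint q 2) ^+ N *: expqD2 q (- (qint q 2) ^-2) N 'X^N.
Proof.
have hc : qint q 2 != 0 by apply: qint_neq0.
set c := qint q 2.
rewrite /qHermite /gen_coef /expqD2.
rewrite (big_ord_widen (N.+1).*2 (fun i => expmsq_coef R i *: eq_coef q (N - i)));
  last by rewrite -addnn leq_addr.
rewrite big_mkcond /=. rewrite (@sum_double {poly R} (fun i => if (i < N.+1)%N then expmsq_coef R i *: eq_coef q (N - i) else 0)) !scaler_sumr; apply: eq_bigr => n _.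
have -> : (if (n.*2.+1 < N.+1)%N then expmsq_coef R n.*2.+1 *: eq_coef q (N - n.*2.+1) else 0) = 0.
  by case: ifP => // _; rewrite /expmsq_coef /= odd_double /= scale0r.
rewrite addr0 iterX mul2n.
case: (ltnP n.*2 N.+1) => hn.
- rewrite /expmsq_coef odd_double /= doubleK /eq_coef !scalerA.
  congr (_ *: _).
  rewrite (@qfact_split _ q N n.*2) // -/c.
  rewrite (exprNn (c ^- 2)) exprVn -exprM mul2n.
  have hf := @qfact_neq0 R q (N - n.*2) hq0 hq1.
  have -> : c ^+ N = c ^+ (N - n.*2) * c ^+ n.*2.
    by rewrite -exprD subnK.
  have hn0 : (n`!)%:R != 0 :> R by rewrite pnatr_eq0 -lt0n fact_gt0.
  have hc2 : c ^+ n.*2 != 0 by rewrite expf_neq0.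
  by field; rewrite hf hn0 hc2.
- by rewrite (bigD1 (Ordinal hn)) //= subnn qint0 mul0r !scale0r !scaler0.
Qed.
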